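(* Let $P$ (principals) and $V$ (values) be sets, $o\in P$ a distinguished principal, and $R\subseteq P\times V\times P\times K$ a set of communication rules, where $K=2^{P\times V}$, such that (i) $R$ contains no self-rules, i.e. no rule of the form $(p,v,p,k)$, and (ii) every rule $(p_b,v,p_a,k_a)\in R$ satisfies $k_a\subseteq\{p_a\}\times V$. Let $k_0\in K$, put $V_0=\mathrm{Knowledge}(k_0)$, and assume $(P\setminus\{o\})\times V_0\subseteq k_0$. For $n\ge 0$ let $k_n=f_R^n(k_0)$. Then for every $n\ge 0$ there exists a unique set $X_n\subseteq V$ with $$k_n=\big[(P\setminus\{o\})\times V_0\big]\cup\big[\{o\}\times X_n\big],$$ and this set satisfies $X_n=g^n_{R,k_0}(X_0)$, where $X_0=\{v:(o,v)\in k_0\}$.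
   Context: A state of knowledge is a subset $k\subseteq P\times V$; $K=2^{P\times V}$. For a state $k$, $\mathrm{Knowledge}(k)=\{v:(p,v)\in k\text{ for some }p\in P\}$. For a set of rules $R\subseteq P\times V\times P\times K$, define $f_R:K\to K$ by $$f_R(k)=k\cup\{(p_a,v): (p_b,v)\in k,\ k_a\subseteq k,\ (p_b,v,p_a,k_a)\in R\text{ for some }p_b\in P,\ k_a\in K\}.$$ (A rule $(p_b,v,p_a,k_a)$ means: $p_b$ tells $v$ to $p_a$ if $p_a$'s knowledge includes $k_a$.) Define $R(k_0)=\{(p_b,x,p_a,k_a)\in R: \{x\}\cup\{v:(p_a,v)\in k_a\}\subseteq \mathrm{Knowledge}(k_0)\}$. For $X\subseteq V$ and $x\in V$, write $X\to x$ if there is a rule $(p,x,o,k_\sigma)\in R(k_0)$ with $p\in P\setminus\{o\}$ and $X=\{v:(o,v)\in k_\sigma\}$. Define $g_{R,k_0}:2^V\to 2^V$ by $g_{R,k_0}(X)=X\cup\{x: X_\sigma\to x\text{ for some }X_\sigma\subseteq X\}$, and $g^n_{R,k_0}$ its $n$-fold iterate ($g^0$ the identity). *)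

(* Defs.v *)
From HB Require Import structures.
From mathcomp Require Import all_boot.
From mathcomp Require Import boolp classical_sets.
Set Implicit Arguments. Unset Strict Implicit. Unset Printing Implicit Defensive.
Local Open Scope classical_set_scope.

Definition state (P V : Type) := set (P * V).

Definition Knowledge (P V : Type) (k : state P V) : set V :=
  [set v | exists p, k (p, v)].

Definition rule (P V : Type) := (P * V * P * state P V)%type.

Definition fR (P V : Type) (R : set (rule P V)) (k : state P V) : state P V :=
  k `|` [set x | exists pb ka, k (pb, x.2) /\ ka `<=` k /\ R (pb, x.2, x.1, ka)].

(* R(k0) = { (p_b,x,p_a,k_a) ∈ R : {x} ∪ {v : (p_a,v) ∈ k_a} ⊆ Knowledge(k0) }. *)
Definition Rk0 (P V : Type) (R : set (rule P V)) (k0 : state P V) : set (rule P V) :=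
  [set r | R r /\
     ([set r.1.1.2] `|` [set v | r.2 (r.1.2, v)]) `<=` Knowledge k0].

Definition arrow (P V : Type) (o : P) (R : set (rule P V)) (k0 : state P V)
  (X : set V) (x : V) : Prop :=
  exists (p : P) (ks : state P V),
    Rk0 R k0 (p, x, o, ks) /\ p <> o /\ X = [set v | ks (o, v)].

Definition gR (P V : Type) (o : P) (R : set (rule P V)) (k0 : state P V)
  (X : set V) : set V :=
  X `|` [set x | exists Xs, Xs `<=` X /\ arrow o R k0 Xs x].

(* Main.v *)
Require Import Defs.
From mathcomp Require Import all_boot.
From mathcomp Require Import boolp classical_sets.
Local Open Scope classical_set_scope.

Lemma inv_lemma (P V : Type) (o : P) (R : set (rule P V)) (k0 : state P V) :
  (forall (p : P) (v : V) (ka : state P V), ~ R (p, v, p, ka)) ->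
  (forall (pb : P) (v : V) (pa : P) (ka : state P V),
     R (pb, v, pa, ka) -> ka `<=` [set x | x.1 = pa]) ->
  [set x | x.1 <> o /\ Knowledge k0 x.2] `<=` k0 ->
  forall n : nat,
    iter n (fR R) k0 =
      [set x | x.1 <> o /\ Knowledge k0 x.2] `|`
      [set x | x.1 = o /\ iter n (gR o R k0) [set v | k0 (o, v)] x.2]
    /\ iter n (gR o R k0) [set v | k0 (o, v)] `<=` Knowledge k0.
Proof.
move=> H1 H2 H3; elim=> [|n [IH IHs]] /=.
  split; last by move=> v /= h; exists o.
  apply/seteqP; split => -[p v]; rewrite /setU /=.
    move=> h; case: (pselect (p = o)) => [ep|hp]; first by right; rewrite -ep.
    by left; split => //; exists p.
  by case=> [h|[-> //]]; apply: H3.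
set k := iter n (fR R) k0 in IH *.
set X := iter n (gR o R k0) [set v | k0 (o, v)] in IH IHs *.
have kV : forall p v, k (p, v) -> Knowledge k0 v.
  by move=> p v; rewrite IH => -[[_ ?]|[_ /IHs ?]].
have gS : gR o R k0 X `<=` Knowledge k0.
  move=> v [/IHs //|[Xs [_ [p [ks [[_ Hk] _]]]]]].
  by apply: Hk; left.
split => //.
apply/seteqP; split => -[p v]; rewrite /setU /=.
  case.
    rewrite IH => -[[hp hv]|[/= -> hx]]; [by left|by right; split=> //; left].
  move=> [pb [ka [hb [hka hR]]]] /=.
  case: (pselect (p = o)) => [ep|hp].
    right; split => //; right.
    exists [set w | ka (o, w)]; split.
      move=> w /= /hka; rewrite IH => -[[/= //]|[_ //]].
    exists pb, ka; split; last split => //.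
      split; rewrite -ep //.
      move=> w [->|/= hw]; first by apply: (kV pb).
      exact: (kV p w (hka _ hw)).
    by move=> e; apply: (H1 pb v ka); move: hR; rewrite /= e ep.
  by left; split => //; apply: (kV pb).
case=> [[hp hv]|[-> [hx|[Xs [hXs [q [ks [[hR hk] [hpo eX]]]]]]]]].
- by left; rewrite IH; left.
- by left; rewrite IH; right.
right; exists q, ks; split; last split => //.
  by rewrite IH; left; split; [exact: hpo | apply: hk; left].
move=> [q' w] hq; rewrite IH; right.
have /= eq := H2 _ _ _ _ hR _ hq; split => //.
by apply: hXs; rewrite eX /= -eq.
Qed.

Theorem lemma1 (P V : Type) (o : P) (R : set (rule P V)) (k0 : state P V) :
  (* (i) no self-rules *)
  (forall (p : P) (v : V) (ka : state P V), ~ R (p, v, p, ka)) ->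
  (* (ii) every rule (p_b,v,p_a,k_a) has k_a ⊆ {p_a} x V *)
  (forall (pb : P) (v : V) (pa : P) (ka : state P V),
     R (pb, v, pa, ka) -> ka `<=` [set x | x.1 = pa]) ->
  (* (P \ {o}) x V0 ⊆ k0, with V0 = Knowledge k0 *)
  [set x | x.1 <> o /\ Knowledge k0 x.2] `<=` k0 ->
  forall n : nat,
    (exists! X : set V,
        iter n (fR R) k0 =
        [set x | x.1 <> o /\ Knowledge k0 x.2] `|` [set x | x.1 = o /\ X x.2]) /\
    (forall X : set V,
        iter n (fR R) k0 =
        [set x | x.1 <> o /\ Knowledge k0 x.2] `|` [set x | x.1 = o /\ X x.2] ->
        X = iter n (gR o R k0) [set v | k0 (o, v)]).
Proof.
move=> H1 H2 H3 n.
have [E _] := @inv_lemma P V o R k0 H1 H2 H3 n.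
have U : forall X Y : set V,
    [set x | x.1 <> o /\ Knowledge k0 x.2] `|` [set x | x.1 = o /\ X x.2] =
    [set x | x.1 <> o /\ Knowledge k0 x.2] `|` [set x | x.1 = o /\ Y x.2] ->
    X = Y.
  move=> X Y e; apply/seteqP; split => v hv.
    have : ([set x | x.1 <> o /\ Knowledge k0 x.2] `|` [set x | x.1 = o /\ Y x.2]) (o, v).
      by rewrite -e; right.
    by case=> [[]|[]].
  have : ([set x | x.1 <> o /\ Knowledge k0 x.2] `|` [set x | x.1 = o /\ X x.2]) (o, v).
    by rewrite e; right.
  by case=> [[]|[]].
split.
  exists (iter n (gR o R k0) [set v | k0 (o, v)]); split => // Y hY.
  by apply: U; rewrite -hY.
by move=> X hX; apply: U; rewrite -hX.
Qed.
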